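(* Let $\Omega$ be a topological space and suppose that for every space $\Omega'$ homeomorphic to $\Omega$ a family $\mathcal{K}(\Omega')$ of subsets of $\Omega'$ is given such that: (AX1) if $\Omega_1\cong\Omega_2\cong\Omega$ and $h\colon\Omega_1\to\Omega_2$ is a homeomorphism, then for every $A\subset\Omega_1$, $A\in\mathcal{K}(\Omega_1)$ iff $h(A)\in\mathcal{K}(\Omega_2)$; (AX2) if $K_1,K_2\in\mathcal{K}(\Omega)$ and $K_1\cong K_2$, then there is a homeomorphism of $\Omega$ onto $\Omega$ mapping $K_1$ onto $K_2$. Suppose further that for all $K,L\in\mathcal{K}(\Omega)$ and $f\in\mathcal{C}(K,L)$ there are given a topological space $\Lambda(K)$, a map $\Lambda(f)\in\mathcal{C}(\Lambda(K),\Lambda(L))$ and a topological embedding $\delta_K\colon K\to\Lambda(K)$ such that: ($\Lambda$1) $\Lambda(\mathrm{id}_K)=\mathrm{id}_{\Lambda(K)}$ and $\Lambda(g\circ f)=\Lambda(g)\circ\Lambda(f)$ whenever the composition makes sense; ($\Lambda$2) $\Lambda(K)\cong\Omega$ and $\delta_K(K)\in\mathcal{K}(\Lambda(K))$ for each $K\in\mathcal{K}(\Omega)$; ($\Lambda$3) $\Lambda(f)\circ\delta_K=\delta_L\circ f$ for all $K,L\in\mathcal{K}(\Omega)$, $f\in\mathcal{C}(K,L)$. Then there is an assignment, defined for all $K,L\in\mathcal{K}(\Omega)$ and $\varphi\in\mathcal{C}(K,L)$, $(\varphi,L)\mapsto\widehat{\varphi}_L\in\mathcal{C}(\Omega,\Omega)$,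 such that $\widehat{\varphi}_L$ extends $\varphi$, $\widehat{\mathrm{id}_L}_L=\mathrm{id}_\Omega$ and $\widehat{(\psi\circ\varphi)}_M=\widehat\psi_M\circ\widehat\varphi_L$ for $\psi\in\mathcal{C}(L,M)$, $M\in\mathcal{K}(\Omega)$. If moreover $\Omega$ is metrizable and for each $K\in\mathcal{K}(\Omega)$ there is an assignment $\operatorname{Metr}(K)\ni d\mapsto\Lambda(d)\in\operatorname{Metr}(\Lambda(K))$ such that ($\Lambda$4) $d(x,y)=\Lambda(d)(\delta_K(x),\delta_K(y))$ for $x,y\in K$, and ($\Lambda$5) for all $K,L\in\mathcal{K}(\Omega)$ and $\varrho\in\operatorname{Metr}(L)$ the map $(\mathcal{C}(K,L),\varrho_{\sup})\ni\psi\mapsto\Lambda(\psi)\in(\mathcal{C}(\Lambda(K),\Lambda(L)),\Lambda(\varrho)_{\sup})$ is isometric, then for every $L\in\mathcal{K}(\Omega)$ and $d\in\operatorname{Metr}(L)$ there is $\widehat d\in\operatorname{Metr}(\Omega)$ extending $d$ such that for every $K\in\mathcal{K}(\Omega)$ the map $(\mathcal{C}(K,L),d_{\sup})\ni\varphi\mapsto\widehat\varphi_L\in(\mathcal{C}(\Omega,\Omega),\widehat d_{\sup})$ is isometric.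
   Context: $\mathcal{C}(X,Y)$ denotes the set of continuous maps $X\to Y$; $\operatorname{Metr}(X)$ denotes the set of all compatible (i.e. inducing the topology) bounded metrics on a metrizable space $X$; for a metric $d$ on $Y$, $d_{\sup}(f,g)=\sup_x d(f(x),g(x))$. *)

(* Defs.v *)
From Stdlib Require Import Reals Classical ClassicalEpsilon.
Open Scope R_scope.
Set Implicit Arguments.

Record Top := mkTop {
  carrier :> Type;
  is_open : (carrier -> Prop) -> Prop;
  open_full : is_open (fun _ => True);
  open_inter : forall U V, is_open U -> is_open V -> is_open (fun x => U x /\ V x);
  open_union : forall F : (carrier -> Prop) -> Prop,
      (forall U, F U -> is_open U) -> is_open (fun x => exists U, F U /\ U x)
}.

Definition continuous (X Y : Top) (f : X -> Y) : Prop :=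
  forall V : Y -> Prop, is_open Y V -> is_open X (fun x => V (f x)).

Definition image (X Y : Type) (f : X -> Y) (A : X -> Prop) : Y -> Prop :=
  fun y => exists x, A x /\ f x = y.

Definition homeomorphism (X Y : Top) (h : X -> Y) : Prop :=
  continuous X Y h /\
  exists g : Y -> X, continuous Y X g /\
     (forall x, g (h x) = x) /\ (forall y, h (g y) = y).

Definition homeomorphic (X Y : Top) : Prop := exists h : X -> Y, homeomorphism X Y h.

Definition embedding (X Y : Top) (f : X -> Y) : Prop :=
  continuous X Y f /\ (forall x x', f x = f x' -> x = x') /\
  (forall U, is_open X U -> exists V, is_open Y V /\ forall x, U x <-> V (f x)).

Section Subspace.
Variables (X : Top) (A : X -> Prop).

Definition sub_open (U : {x : X | A x} -> Prop) : Prop :=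
  exists V, is_open X V /\ forall x, U x <-> V (proj1_sig x).

Lemma sub_open_full : sub_open (fun _ => True).
Proof. exists (fun _ => True); split; [apply open_full | tauto]. Qed.

Lemma sub_open_inter U V : sub_open U -> sub_open V -> sub_open (fun x => U x /\ V x).
Proof.
  intros [U' [HU' HU]] [V' [HV' HV]]. exists (fun x => U' x /\ V' x).
  split; [apply open_inter; auto|]. intros x; rewrite HU, HV; tauto.
Qed.

Lemma sub_open_union (F : ({x : X | A x} -> Prop) -> Prop) :
  (forall U, F U -> sub_open U) -> sub_open (fun x => exists U, F U /\ U x).
Proof.
  intros HF.
  exists (fun y => exists V, (is_open X V /\ exists U, F U /\ forall x, U x <-> V (proj1_sig x)) /\ V y).
  split.
  - apply open_union. intros V [HV _]; exact HV.
  - intros x; split.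
    + intros [U [FU Ux]]. destruct (HF U FU) as [V [HV HUV]].
      exists V; split; [split; [exact HV | exists U; auto] | apply HUV; exact Ux].
    + intros [V [[HV [U [FU HUV]]] Vx]]. exists U; split; [exact FU | apply HUV; exact Vx].
Qed.

Definition sub : Top := @mkTop {x : X | A x} sub_open sub_open_full sub_open_inter sub_open_union.
End Subspace.
Arguments sub {X} A.

Definition Cont (X Y : Top) : Type := {f : X -> Y | continuous X Y f}.

Definition fn (X Y : Top) (f : Cont X Y) : X -> Y := proj1_sig f.
Coercion fn : Cont >-> Funclass.

Lemma id_continuous (X : Top) : continuous X X (fun x => x).
Proof. intros V HV; exact HV. Qed.

Lemma comp_continuous (X Y Z : Top) (f : X -> Y) (g : Y -> Z) :
  continuous X Y f -> continuous Y Z g -> continuous X Z (fun x => g (f x)).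
Proof. intros Hf Hg V HV. apply (Hf (fun y => V (g y))), Hg, HV. Qed.

Definition idC (X : Top) : Cont X X := exist _ (fun x => x) (id_continuous X).
Definition compC (X Y Z : Top) (g : Cont Y Z) (f : Cont X Y) : Cont X Z :=
  exist _ (fun x => g (f x)) (comp_continuous (proj2_sig f) (proj2_sig g)).

Definition is_metric (X : Type) (d : X -> X -> R) : Prop :=
  (forall x y, d x y = 0 <-> x = y) /\
  (forall x y, d x y = d y x) /\
  (forall x y z, d x z <= d x y + d y z).

Definition metric_open (X : Type) (d : X -> X -> R) (U : X -> Prop) : Prop :=
  forall x, U x -> exists eps, 0 < eps /\ forall y, d x y < eps -> U y.

Definition compatible_metric (X : Top) (d : X -> X -> R) : Prop :=
  is_metric d /\ forall U, is_open X U <-> metric_open d U.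

Definition bounded_fun2 (X : Type) (d : X -> X -> R) : Prop :=
  exists M, forall x y, d x y <= M.

Definition Metr (X : Top) : Type :=
  {d : X -> X -> R | compatible_metric X d /\ bounded_fun2 d}.

Definition dist (X : Top) (d : Metr X) : X -> X -> R := proj1_sig d.
Coercion dist : Metr >-> Funclass.

Definition metrizable (X : Top) : Prop := exists d, compatible_metric X d.

(** supremum of a set of reals (0 if it has no least upper bound,
    e.g. if it is empty) *)
Definition Rsup (E : R -> Prop) : R :=
  match excluded_middle_informative (exists l, is_lub E l) with
  | left H => proj1_sig (constructive_indefinite_description _ H)
  | right _ => 0
  end.

Definition sup_dist (X Y : Type) (d : Y -> Y -> R) (f g : X -> Y) : R :=
  Rsup (fun r => exists x, r = d (f x) (g x)).

(* Main.v *)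
Require Import Defs.
From Stdlib Require Import Reals Classical ClassicalEpsilon FunctionalExtensionality PropExtensionality.
Open Scope R_scope.

Lemma open_ext (X : Top) (U U' : X -> Prop) :
  is_open X U -> (forall x, U x <-> U' x) -> is_open X U'.
Proof.
  intros HU H. replace U' with U; auto.
  apply functional_extensionality; intro x; apply propositional_extensionality; auto.
Qed.

Lemma sig_eq' (A : Type) (P : A -> Prop) (a b : {x | P x}) :
  proj1_sig a = proj1_sig b -> a = b.
Proof.
  destruct a as [a pa], b as [b pb]; simpl; intro E; subst.
  f_equal; apply proof_irrelevance.
Qed.

Lemma cont_into_sub (X Y : Top) (B : Y -> Prop) (f : X -> sub B) (F : X -> Y) :
  continuous X Y F -> (forall x, proj1_sig (f x) = F x) -> continuous X (sub B) f.
Proof.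
  intros HF Hf V [V' [oV' HV]].
  apply open_ext with (fun x => V' (F x)); [apply HF; exact oV'|].
  intro x. rewrite HV, Hf. tauto.
Qed.

Lemma proj_cont (X : Top) (A : X -> Prop) : continuous (sub A) X (@proj1_sig _ _).
Proof. intros V HV. exists V; split; [exact HV| tauto]. Qed.

Lemma sub_map_cont (X Y : Top) (A : X -> Prop) (B : Y -> Prop) (f : sub A -> sub B) (F : X -> Y) :
  continuous X Y F -> (forall x, proj1_sig (f x) = F (proj1_sig x)) -> continuous (sub A) (sub B) f.
Proof.
  intros HF Hf. apply cont_into_sub with (fun x => F (proj1_sig x)); auto.
  apply (comp_continuous (@proj_cont X A) HF).
Qed.

Lemma transport_metric (X Y : Top) (G : X -> Y) (H : Y -> X) :
  continuous X Y G -> continuous Y X H -> (forall y, G (H y) = y) -> (forall x, H (G x) = x) ->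
  forall e : Metr Y, compatible_metric X (fun a b => e (G a) (G b)) /\ bounded_fun2 (fun a b => e (G a) (G b)).
Proof.
  intros cG cH GH HG [e [[[z [sy tr]] oi] [M HM]]]; simpl.
  split; [split; [split; [|split]|] | exists M; intros; apply HM].
  - intros a b; split; intro h.
    + apply z in h. rewrite <- (HG a), <- (HG b), h; reflexivity.
    + subst; apply z; reflexivity.
  - intros; apply sy.
  - intros; apply tr.
  - intro U; split; intro hU.
    + assert (h1 : metric_open e (fun y => U (H y))) by (apply oi, cH, hU).
      intros a Ua. rewrite <- (HG a) in Ua. destruct (h1 _ Ua) as [eps [pe Heps]].
      exists eps; split; auto. intros b hb. rewrite <- (HG b). apply Heps; auto.
    + assert (h1 : metric_open e (fun y => U (H y))).
      { intros y Uy. destruct (hU _ Uy) as [eps [pe Heps]]. exists eps; split; auto.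
        intros y' hy. apply Heps. rewrite !GH; auto. }
      apply oi in h1. apply cG in h1. apply open_ext with (1 := h1).
      intro x; rewrite HG; tauto.
Qed.

Lemma key (Omega : Top)
  (KK : forall T : Top, (T -> Prop) -> Prop)
  (AX1 : forall (O1 O2 : Top), homeomorphic O1 Omega -> homeomorphic O2 Omega ->
           forall h : O1 -> O2, homeomorphism O1 O2 h ->
           forall A : O1 -> Prop, KK O1 A <-> KK O2 (image h A))
  (AX2 : forall K1 K2 : Omega -> Prop, KK Omega K1 -> KK Omega K2 ->
           homeomorphic (sub K1) (sub K2) ->
           exists h : Omega -> Omega, homeomorphism Omega Omega h /\
             forall y, image h K1 y <-> K2 y)
  (k : Omega -> Prop) (hk : KK Omega k) (Lm : Top)
  (LF : Cont (sub k) (sub k) -> Cont Lm Lm) (dl : sub k -> Lm)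
  (emb : embedding (sub k) Lm dl)
  (Lid : forall y, LF (idC _) y = y)
  (Lcomp : forall f g y, LF (compC g f) y = LF g (LF f y))
  (Lhom : homeomorphic Lm Omega)
  (LK : KK Lm (image dl (fun _ => True)))
  (L3 : forall f x, LF f (dl x) = dl (f x)) :
  exists p : (Lm -> Omega) * (Omega -> Lm),
    continuous Lm Omega (fst p) /\ continuous Omega Lm (snd p) /\
    (forall z, snd p (fst p z) = z) /\ (forall x, fst p (snd p x) = x) /\
    (forall x, fst p (dl x) = proj1_sig x).
Proof.
  destruct emb as [dc [dinj dop]].
  destruct Lhom as [g [gc [g' [g'c [gg' g'g]]]]].
  assert (homO : homeomorphic Omega Omega).
  { exists (fun x => x); split; [apply id_continuous|].
    exists (fun x => x); repeat split; auto; apply id_continuous. }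
  set (K2 := image g (image dl (fun _ => True))).
  assert (hK2 : KK Omega K2).
  { apply (AX1 Lm Omega (ex_intro _ g (conj gc (ex_intro _ g' (conj g'c (conj gg' g'g))))) homO g
      (conj gc (ex_intro _ g' (conj g'c (conj gg' g'g))))); exact LK. }
  assert (inK2 : forall x, K2 (g (dl x))).
  { intro x. exists (dl x); split; auto. exists x; auto. }
  set (w := fun x : sub k => exist K2 (g (dl x)) (inK2 x) : sub K2).
  assert (ex : forall y : sub K2, exists x, g (dl x) = proj1_sig y).
  { intros [y Hy]; simpl. destruct Hy as [z [[x [_ e1]] e2]]. exists x; subst; auto. }
  set (w' := fun y => proj1_sig (constructive_indefinite_description _ (ex y))).
  assert (w'spec : forall y, g (dl (w' y)) = proj1_sig y).
  { intro y; unfold w'; destruct constructive_indefinite_description; auto. }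
  assert (ginj : forall a b, g a = g b -> a = b).
  { intros a b e; rewrite <- (gg' a), <- (gg' b), e; auto. }
  assert (ww' : forall x, w' (w x) = x).
  { intro x. apply dinj, ginj. rewrite w'spec. reflexivity. }
  assert (w'w : forall y, w (w' y) = y).
  { intro y. apply sig_eq'. simpl. apply w'spec. }
  assert (wc : continuous (sub k) (sub K2) w).
  { apply cont_into_sub with (fun x => g (dl x)); auto.
    apply (comp_continuous dc gc). }
  assert (w'c : continuous (sub K2) (sub k) w').
  { intros U oU. destruct (dop U oU) as [V [oV HV]].
    apply open_ext with (fun y : sub K2 => V (g' (proj1_sig y))).
    - exists (fun z => V (g' z)); split; [apply g'c, oV| tauto].
    - intro y. rewrite HV, <- w'spec, gg'. tauto. }
  destruct (AX2 K2 k hK2 hk) as [h [[hc [h' [h'c [hh' h'h]]]] Himg]].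
  { exists w'; split; auto. exists w; auto. }
  assert (inK : forall x, k (h (g (dl x)))).
  { intro x. apply Himg. exists (g (dl x)); auto. }
  set (v := fun x : sub k => exist k (h (g (dl x))) (inK x) : sub k).
  assert (inK2' : forall y : sub k, K2 (h' (proj1_sig y))).
  { intros [y ky]; simpl. apply Himg in ky. destruct ky as [z [Kz e]].
    subst. rewrite hh'. auto. }
  set (r := fun y : sub k => exist K2 (h' (proj1_sig y)) (inK2' y) : sub K2).
  set (vi := fun y => w' (r y)).
  assert (vc : continuous (sub k) (sub k) v).
  { apply cont_into_sub with (fun x => h (g (dl x))); auto.
    apply (comp_continuous (comp_continuous dc gc) hc). }
  assert (vic : continuous (sub k) (sub k) vi).
  { apply (comp_continuous (f := r) (g := w')); auto.
    apply sub_map_cont with h'; auto. }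
  assert (viv : forall x, vi (v x) = x).
  { intro x. unfold vi. replace (r (v x)) with (w x); auto.
    apply sig_eq'; simpl. rewrite hh'; auto. }
  assert (vvi : forall y, v (vi y) = y).
  { intro y. apply sig_eq'; simpl. unfold vi. rewrite w'spec. simpl. apply h'h. }
  set (vC := exist _ vi vic : Cont (sub k) (sub k)).
  set (vfC := exist _ v vc : Cont (sub k) (sub k)).
  assert (E1 : compC vfC vC = idC _).
  { apply sig_eq'; simpl. apply functional_extensionality; intro; apply vvi. }
  assert (E2 : compC vC vfC = idC _).
  { apply sig_eq'; simpl. apply functional_extensionality; intro; apply viv. }
  exists (fun z => h (g (LF vC z)), fun x => LF vfC (g' (h' x))); simpl.
  split; [|split; [|split; [|split]]].
  - apply (comp_continuous (comp_continuous (proj2_sig (LF vC)) gc) hc).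
  - apply (comp_continuous (comp_continuous h'c g'c) (proj2_sig (LF vfC))).
  - intro z. rewrite hh', gg', <- Lcomp. rewrite E1, Lid. reflexivity.
  - intro x. rewrite <- Lcomp, E2, Lid, g'g, h'h. reflexivity.
  - intro x. rewrite L3. simpl. change (proj1_sig (v (vi x)) = proj1_sig x). rewrite vvi; auto.
Qed.

Theorem mainTheorem2
  (Omega : Top)
  (KK : forall T : Top, (T -> Prop) -> Prop)
  (AX1 : forall (O1 O2 : Top), homeomorphic O1 Omega -> homeomorphic O2 Omega ->
           forall h : O1 -> O2, homeomorphism O1 O2 h ->
           forall A : O1 -> Prop, KK O1 A <-> KK O2 (image h A))
  (AX2 : forall K1 K2 : Omega -> Prop, KK Omega K1 -> KK Omega K2 ->
           homeomorphic (sub K1) (sub K2) ->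
           exists h : Omega -> Omega, homeomorphism Omega Omega h /\
             forall y, image h K1 y <-> K2 y)
  (Lam : forall K : {K : Omega -> Prop | KK Omega K}, Top)
  (LamF : forall K L : {K : Omega -> Prop | KK Omega K},
            Cont (sub (proj1_sig K)) (sub (proj1_sig L)) -> Cont (Lam K) (Lam L))
  (delta : forall K : {K : Omega -> Prop | KK Omega K}, sub (proj1_sig K) -> Lam K)
  (delta_emb : forall K, embedding (sub (proj1_sig K)) (Lam K) (delta K))
  (L1_id : forall K y, LamF K K (idC _) y = y)
  (L1_comp : forall K L M (f : Cont (sub (proj1_sig K)) (sub (proj1_sig L)))
               (g : Cont (sub (proj1_sig L)) (sub (proj1_sig M))) y,
               LamF K M (compC g f) y = LamF L M g (LamF K L f y))
  (L2_hom : forall K, homeomorphic (Lam K) Omega)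
  (L2_K : forall K, KK (Lam K) (image (delta K) (fun _ => True)))
  (L3 : forall K L (f : Cont (sub (proj1_sig K)) (sub (proj1_sig L))) x,
          LamF K L f (delta K x) = delta L (f x)) :
  exists hat : forall K L : {K : Omega -> Prop | KK Omega K},
                 Cont (sub (proj1_sig K)) (sub (proj1_sig L)) -> Cont Omega Omega,
    (* hat phi extends phi *)
    (forall K L (phi : Cont (sub (proj1_sig K)) (sub (proj1_sig L))) (x : sub (proj1_sig K)),
        hat K L phi (proj1_sig x) = proj1_sig (phi x)) /\
    (forall L x, hat L L (idC _) x = x) /\
    (forall K L M (phi : Cont (sub (proj1_sig K)) (sub (proj1_sig L)))
       (psi : Cont (sub (proj1_sig L)) (sub (proj1_sig M))) x,
        hat K M (compC psi phi) x = hat L M psi (hat K L phi x)) /\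
    (metrizable Omega ->
     forall (LamD : forall K, Metr (sub (proj1_sig K)) -> Metr (Lam K)),
     (forall K (d : Metr (sub (proj1_sig K))) x y,
         d x y = LamD K d (delta K x) (delta K y)) ->
     (forall K L (rho : Metr (sub (proj1_sig L)))
        (f g : Cont (sub (proj1_sig K)) (sub (proj1_sig L))),
         sup_dist rho f g = sup_dist (LamD L rho) (LamF K L f) (LamF K L g)) ->
     forall L (d : Metr (sub (proj1_sig L))),
       exists dh : Metr Omega,
         (forall x y : sub (proj1_sig L), dh (proj1_sig x) (proj1_sig y) = d x y) /\
         (forall K (phi psi : Cont (sub (proj1_sig K)) (sub (proj1_sig L))),
             sup_dist d phi psi = sup_dist dh (hat K L phi) (hat K L psi))).
Proof.
  assert (keyK : forall K : {K : Omega -> Prop | KK Omega K},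
    exists p : (Lam K -> Omega) * (Omega -> Lam K),
    continuous (Lam K) Omega (fst p) /\ continuous Omega (Lam K) (snd p) /\
    (forall z, snd p (fst p z) = z) /\ (forall x, fst p (snd p x) = x) /\
    (forall x, fst p (delta K x) = proj1_sig x)).
  { intro K. apply (@key Omega KK AX1 AX2 _ (proj2_sig K) (Lam K) (LamF K K) (delta K)); auto. }
  set (P := fun K => proj1_sig (constructive_indefinite_description _ (keyK K))).
  assert (PS : forall K, continuous (Lam K) Omega (fst (P K)) /\ continuous Omega (Lam K) (snd (P K)) /\
    (forall z, snd (P K) (fst (P K) z) = z) /\ (forall x, fst (P K) (snd (P K) x) = x) /\
    (forall x, fst (P K) (delta K x) = proj1_sig x)).
  { intro K; unfold P; destruct constructive_indefinite_description; auto. }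
  set (H := fun K => fst (P K)). set (G := fun K => snd (P K)).
  assert (Hc : forall K, continuous _ _ (H K)) by (intro K; apply (PS K)).
  assert (Gc : forall K, continuous _ _ (G K)) by (intro K; apply (PS K)).
  assert (GH : forall K z, G K (H K z) = z) by (intro K; apply (PS K)).
  assert (HG : forall K x, H K (G K x) = x) by (intro K; apply (PS K)).
  assert (Hd : forall K x, H K (delta K x) = proj1_sig x) by (intro K; apply (PS K)).
  assert (Gd : forall K x, G K (proj1_sig x) = delta K x).
  { intros K x. rewrite <- Hd, GH. reflexivity. }
  clearbody H G. clear PS P keyK.
  exists (fun K L phi => exist _ (fun x => H L (LamF K L phi (G K x)))
            (comp_continuous (comp_continuous (Gc K) (proj2_sig (LamF K L phi))) (Hc L))).
  simpl. split; [|split; [|split]].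
  - intros K L phi x. rewrite Gd, L3, Hd. reflexivity.
  - intros L x. rewrite L1_id, HG. reflexivity.
  - intros K L M phi psi x. rewrite L1_comp, GH. reflexivity.
  - intros _ LamD HD Hsup L d.
    exists (exist _ (fun a b => LamD L d (G L a) (G L b))
              (@transport_metric Omega (Lam L) (G L) (H L) (Gc L) (Hc L) (GH L) (HG L) (LamD L d))).
    split.
    + intros x y. simpl. rewrite !Gd. symmetry. apply HD.
    + intros K phi psi. rewrite Hsup. unfold sup_dist. simpl. f_equal.
      apply functional_extensionality; intro r; apply propositional_extensionality; split.
      * intros [w e]. exists (H K w). rewrite !GH. exact e.
      * intros [x e]. exists (G K x). rewrite !GH in e. exact e.
Qed.
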